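(* Let $\widehat D=(Q,\widehat\Sigma,q_0,\delta,F)$ be as in the context. For all $q,q'\in Q$ and $\sigma\in\Sigma$: if $\delta(q,\sigma^0)=q'$, then there exist $\mathit{act}\in\Sigma_{\mathsf{Act}}$ and $q_f\in Q$ with $\mathit{act}[0]=0$, $\delta(q,\mathit{act})=q_f$ and $\mathit{act}|_\sigma\in\{0,+1\}$; and if $\delta(q,\sigma^1)=q'$, then there exist $\mathit{act}\in\Sigma_{\mathsf{Act}}$ and $q_f\in Q$ with $\mathit{act}[0]=1$, $\delta(q,\mathit{act})=q_f$ and $\mathit{act}|_\sigma\in\{-1,0,+1\}$.
   Context: Let $\Sigma=\{\sigma_1,\dots,\sigma_k\}$ be a finite alphabet. A sample set is a pair of finite sets of words $\mathcal S^+,\mathcal S^-\subseteq\Sigma^*$ with $\mathcal S^+\cap\mathcal S^-=\emptyset$; write $\mathcal S=\mathcal S^+\cup\mathcal S^-$ and $\mathrm{pref}(\mathcal S)$ for the set of all prefixes (including $\varepsilon$ and the words themselves) of words of $\mathcal S$. We are given $\mathsf{ce}:\mathrm{pref}(\mathcal S)\to\mathbb N$ with $\mathsf{ce}(\varepsilon)=0$ and $\mathsf{ce}(w\sigma)-\mathsf{ce}(w)\in\{-1,0,+1\}$ whenever $w\sigma\in\mathrm{pref}(\mathcal S)$, $\sigma\in\Sigma$. For $d\in\mathbb N$, $\mathrm{sgn}(d)=0$ if $d=0$ and $1$ otherwise. For $w\in\mathrm{pref}(\mathcal S)$ define $\mathsf{Act}(w)\in\{0,1\}\times\{0,+1,-1,\bot\}^k$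 by $\mathsf{Act}(w)[0]=\mathrm{sgn}(\mathsf{ce}(w))$ and, for $i\in[1,k]$, $\mathsf{Act}(w)[i]=\mathsf{ce}(w\sigma_i)-\mathsf{ce}(w)$ if $w\sigma_i\in\mathrm{pref}(\mathcal S)$, and $\mathsf{Act}(w)[i]=\bot$ otherwise. For a tuple $\mathit{act}$ of this shape, $\mathit{act}|_{\sigma_i}$ denotes $\mathit{act}[i]$. Two such tuples $x,y$ are similar, $x\sim y$, if either $x[0]\neq y[0]$, or for all $i\in[1,k]$: $x[i]=\bot$ or $y[i]=\bot$ or $x[i]=y[i]$; otherwise $x\not\sim y$. Let $\widetilde\Sigma=\{\sigma^0,\sigma^1:\sigma\in\Sigma\}$ (fresh letters). For $w\in\mathrm{pref}(\mathcal S)$, $\mathsf{Enc}(\varepsilon)=\varepsilon$ and $\mathsf{Enc}(w)$ is the word over $\widetilde\Sigma$ of the same length with $\mathsf{Enc}(w)[0]=w[0]^0$ and $\mathsf{Enc}(w)[i]=w[i]^{\mathrm{sgn}(\mathsf{ce}(w[0\cdots i-1]))}$ for $i>0$ (positions indexed from $0$). Let $\Sigma_{\mathsf{Act}}=\{\mathsf{Act}(w):w\in\mathrm{pref}(\mathcal S)\}$, viewed as a set of fresh letters, and $\widehat\Sigma=\widetilde\Sigma\cup\Sigma_{\mathsf{Act}}$. The enriched sample over $\widehat\Sigma$ is: $\widehat{\mathcal S}^+=\{\mathsf{Enc}(w):w\in\mathcal S^+\}\cup\{\mathsf{Enc}(w)\cdot\mathsf{Act}(w):w\in\mathrm{pref}(\mathcal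 S)\}$ and $\widehat{\mathcal S}^-=\{\mathsf{Enc}(w):w\in\mathcal S^-\}\cup\{\mathsf{Enc}(w)\cdot\mathit{op}:w\in\mathrm{pref}(\mathcal S),\ \mathit{op}\in\Sigma_{\mathsf{Act}},\ \mathit{op}\not\sim\mathsf{Act}(w)\}$. $\widehat D=(Q,\widehat\Sigma,q_0,\delta,F)$ is a deterministic finite automaton with possibly partial transition function $\delta$ (a word is accepted iff its run exists and ends in $F$) such that: (i) $\widehat D$ accepts every word of $\widehat{\mathcal S}^+$ and rejects every word of $\widehat{\mathcal S}^-$; (ii) every transition comes from a prefix of a positive sample: whenever $\delta(q,x)=q'$ with $x\in\widehat\Sigma$, there is a word $u$ with $ux\in\mathrm{pref}(\widehat{\mathcal S}^+)$ and $\delta(q_0,u)=q$. (These properties hold e.g. for the output of the RPNI algorithm.) *)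

(* Defs.v *)
From mathcomp Require Import all_boot all_order all_algebra.
Set Implicit Arguments. Unset Strict Implicit. Unset Printing Implicit Defensive.

(* Alphabet Sigma = {sigma_1..sigma_k} is represented by 'I_k
   (sigma_{i+1} is the ordinal i). *)
Definition word (k : nat) := seq 'I_k.

(* An Act-tuple: component 0 is a bit (false = 0, true = 1), components
   1..k are elements of {0,+1,-1,bot}, represented as option int
   (None = bot). *)
Definition act (k : nat) := (bool * {ffun 'I_k -> option int})%type.

(* Letters of widehat Sigma: inl (sigma, b) is sigma^b (b = false is 0,
   b = true is 1); inr a is the Act-letter a. *)
Definition letter (k : nat) := ('I_k * bool + act k)%type.

Definition prefS (k : nat) (S : seq (word k)) (v : word k) : bool :=
  has (fun w => prefix v w) S.

Definition Act (k : nat) (S : seq (word k)) (ce : word k -> nat) (w : word k)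
  : act k :=
  (ce w != 0%N,
   [ffun i => if prefS S (rcons w i)
              then Some ((ce (rcons w i))%:Z - (ce w)%:Z)%R else None]).

Definition similar (k : nat) (x y : act k) : bool :=
  (x.1 != y.1) ||
  [forall i, (x.2 i == None) || (y.2 i == None) || (x.2 i == y.2 i)].

Definition Enc (k : nat) (ce : word k -> nat) (w : word k) : seq (letter k) :=
  map (fun p : nat * 'I_k =>
         inl (p.2, if p.1 == 0%N then false else ce (take p.1 w) != 0%N))
      (zip (iota 0 (size w)) w).

Definition inSigmaAct (k : nat) (S : seq (word k)) (ce : word k -> nat)
  (a : act k) : Prop :=
  exists w, prefS S w /\ a = Act S ce w.

Definition posHat (k : nat) (Sp Sm : seq (word k)) (ce : word k -> nat)
  (u : seq (letter k)) : Prop :=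
  (exists w, w \in Sp /\ u = Enc ce w) \/
  (exists w, prefS (Sp ++ Sm) w /\ u = rcons (Enc ce w) (inr (Act (Sp ++ Sm) ce w))).

Definition negHat (k : nat) (Sp Sm : seq (word k)) (ce : word k -> nat)
  (u : seq (letter k)) : Prop :=
  (exists w, w \in Sm /\ u = Enc ce w) \/
  (exists w op, prefS (Sp ++ Sm) w /\ inSigmaAct (Sp ++ Sm) ce op /\
     ~~ similar op (Act (Sp ++ Sm) ce w) /\ u = rcons (Enc ce w) (inr op)).

Definition run (k : nat) (Q : Type) (delta : Q -> letter k -> option Q)
  (q : Q) (u : seq (letter k)) : option Q :=
  foldl (fun o x => obind (fun p => delta p x) o) (Some q) u.

Definition accepts (k : nat) (Q : Type) (delta : Q -> letter k -> option Q)
  (q0 : Q) (F : pred Q) (u : seq (letter k)) : bool :=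
  if run delta q0 u is Some q then F q else false.

(* Main.v *)
Require Import Defs.
From mathcomp Require Import all_boot all_order all_algebra.

Lemma take_zip' (A B : Type) (a : seq A) (b : seq B) n :
  take n (zip a b) = zip (take n a) (take n b).
Proof.
elim: a b n => [|x a IH] [|y b] [|n] //=; by rewrite IH.
Qed.

Lemma Enc_take k (ce : word k -> nat) n w : take n (Enc ce w) = Enc ce (take n w).
Proof.
rewrite /Enc -map_take take_zip' take_iota size_take_min.
apply/eq_in_map => -[i c] Hp /=.
have := map_f fst Hp; rewrite -/(unzip1 _) unzip1_zip ?size_iota ?size_take_min // => Hi.
move: Hi; rewrite mem_iota add0n leq_min => /andP[_ /andP[/ltnW Hin _]].
by rewrite take_takel.
Qed.

Lemma Enc_nth k (ce : word k -> nat) n w c0 : n < size w ->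
  exists b, Enc ce (take n.+1 w) = rcons (Enc ce (take n w)) (inl (nth c0 w n, b))
   /\ (ce [::] = 0%N -> b = (ce (take n w) != 0%N)).
Proof.
move=> Hn.
have: take n.+1 (Enc ce w) = rcons (take n (Enc ce w)) (nth (inl (c0,false)) (Enc ce w) n).
  by apply: take_nth; rewrite size_map size1_zip ?size_iota.
rewrite !Enc_take => ->.
rewrite /Enc (nth_map (0%N, c0)); last by rewrite size1_zip ?size_iota.
rewrite nth_zip ?size_iota // nth_iota //= add0n.
eexists; split; first reflexivity.
move=> H0; case: n Hn => [|n] Hn //=.
by rewrite take0 H0.
Qed.

Lemma prefS_prefix k (S : seq (word k)) v w : prefix v w -> prefS S w -> prefS S v.
Proof. move=> Hvw /hasP[z Hz Hwz]; apply/hasP; exists z => //; exact: prefix_trans Hvw Hwz. Qed.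

Lemma key k (Sp Sm : seq (word k)) (ce : word k -> nat) u s b v :
  ce [::] = 0%N -> posHat Sp Sm ce v -> prefix (rcons u (inl (s, b))) v ->
  exists w0, prefS (Sp ++ Sm) w0 /\ prefS (Sp ++ Sm) (rcons w0 s) /\
    u = Enc ce w0 /\ b = (ce w0 != 0%N).
Proof.
move=> H0 Hpos Hpre.
have [w [Hw Hp]] : exists w, prefS (Sp ++ Sm) w /\ prefix (rcons u (inl (s, b))) (Enc ce w).
  case: Hpos => [[w [Hw Hv]]|[w [Hw Hv]]].
    exists w; split; last by rewrite -Hv. apply/hasP; exists w; last exact: prefix_refl.
    by rewrite mem_cat Hw.
  exists w; split => //; move: Hpre; rewrite Hv !prefixE size_rcons.
  set e := Enc ce w.
  case: (ltnP (size u) (size e)) => Hl.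
    by rewrite -cats1 takel_cat.
  rewrite take_oversize ?size_rcons // => /eqP /rcons_inj [_] //.
have Hsz := size_prefix Hp; rewrite size_rcons /Enc size_map size1_zip ?size_iota // in Hsz.
move: Hp; rewrite prefixE size_rcons Enc_take => /eqP.
have [b' [-> Hb']] := @Enc_nth k ce (size u) w s Hsz.
case/rcons_inj => Hu [Hs Hb].
exists (take (size u) w); split; last split; last split => //.
- exact: prefS_prefix (prefix_take _ _) Hw.
- rewrite -Hs -take_nth //; exact: prefS_prefix (prefix_take _ _) Hw.
- by rewrite -Hb; exact: Hb'.
Qed.

Lemma main_b k (Sp Sm : seq (word k)) (ce : word k -> nat)
  (Q : finType) (q0 : Q) (delta : Q -> letter k -> option Q) (F : pred Q) q q' s b :
  ce [::] = 0%N ->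
  (forall u, posHat Sp Sm ce u -> accepts delta q0 F u) ->
  (forall q x q', delta q x = Some q' ->
     exists u v, posHat Sp Sm ce v /\ prefix (rcons u x) v /\
                 run delta q0 u = Some q) ->
  delta q (inl (s, b)) = Some q' ->
  exists w0 qf, prefS (Sp ++ Sm) w0 /\ prefS (Sp ++ Sm) (rcons w0 s) /\
    b = (ce w0 != 0%N) /\ delta q (inr (Act (Sp ++ Sm) ce w0)) = Some qf.
Proof.
move=> H0 Hacc Htr Hd.
have [u [v [Hv [Hp Hr]]]] := Htr _ _ _ Hd.
have [w0 [Hw0 [Hw0s [Hu Hb]]]] := @key k Sp Sm ce u s b v H0 Hv Hp.
have := Hacc (rcons (Enc ce w0) (inr (Act (Sp ++ Sm) ce w0))).
rewrite /accepts /run foldl_rcons -/(run _ _ _) -Hu Hr /=.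
move=> H; have Hp2 : posHat Sp Sm ce (rcons u (inr (Act (Sp ++ Sm) ce w0))) by right; exists w0; rewrite Hu.
move: (H Hp2); case E: (delta q (inr (Act (Sp ++ Sm) ce w0))) => [qf|] // _.
exists w0, qf; split; first exact: Hw0. split; first exact: Hw0s. by split.
Qed.

Theorem lemma2 (k : nat) (Sp Sm : seq (word k)) (ce : word k -> nat)
  (Q : finType) (q0 : Q) (delta : Q -> letter k -> option Q) (F : pred Q) :
  (forall w, w \in Sp -> w \notin Sm) ->
  ce [::] = 0%N ->
  (forall (w : word k) (s : 'I_k), prefS (Sp ++ Sm) (rcons w s) ->
     ((ce (rcons w s))%:Z - (ce w)%:Z)%R \in [:: 0%R; 1%R; (-1)%R]) ->
  (forall u, posHat Sp Sm ce u -> accepts delta q0 F u) ->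
  (forall u, negHat Sp Sm ce u -> ~~ accepts delta q0 F u) ->
  (forall q x q', delta q x = Some q' ->
     exists u v, posHat Sp Sm ce v /\ prefix (rcons u x) v /\
                 run delta q0 u = Some q) ->
  forall (q q' : Q) (s : 'I_k),
    (delta q (inl (s, false)) = Some q' ->
       exists (a : act k) (qf : Q), inSigmaAct (Sp ++ Sm) ce a /\
         a.1 = false /\ delta q (inr a) = Some qf /\
         a.2 s \in [:: Some 0%R; Some 1%R]) /\
    (delta q (inl (s, true)) = Some q' ->
       exists (a : act k) (qf : Q), inSigmaAct (Sp ++ Sm) ce a /\
         a.1 = true /\ delta q (inr a) = Some qf /\
         a.2 s \in [:: Some (-1)%R; Some 0%R; Some 1%R]).
Proof.
move=> _ H0 Hce Hacc _ Htr q q' s; split => Hd.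
- have [w0 [qf [Hw0 [Hw0s [Hb Hq]]]]] := @main_b k Sp Sm ce Q q0 delta F q q' s _ H0 Hacc Htr Hd.
  exists (Act (Sp ++ Sm) ce w0), qf; split; first by exists w0.
  split; first by rewrite /Act /= -Hb.
  split => //.
  rewrite /Act /= ffunE Hw0s.
  have := Hce _ _ Hw0s; move: Hb => /esym /negbFE /eqP ->.
  rewrite GRing.subr0 !inE; case: (ce _) => [|[|n]] //=.
- have [w0 [qf [Hw0 [Hw0s [Hb Hq]]]]] := @main_b k Sp Sm ce Q q0 delta F q q' s _ H0 Hacc Htr Hd.
  exists (Act (Sp ++ Sm) ce w0), qf; split; first by exists w0.
  split; first by rewrite /Act /= -Hb.
  split => //.
  rewrite /Act /= ffunE Hw0s.
  have := Hce _ _ Hw0s.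
  by rewrite !inE => /or3P[] /eqP ->; rewrite eqxx ?orbT.
Qed.
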